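(* Let $G$ and $G'$ be isomorphic cographs such that, for each of them, the set of robust modules ordered by reverse inclusion has no least element. Suppose $G=\Sigma C$ and $G'=\Sigma C'$ where $C=(I,\le,\ell)$ and $C'=(I',\le',\ell')$ are reduced labelled chains. Then there are infinite initial segments $W$ of $I$ and $W'$ of $I'$ and an isomorphism of labelled chains from $C_{\restriction W}$ onto $C'_{\restriction W'}$.
   Context: Graphs are undirected and loopless; a cograph is a graph with no induced subgraph isomorphic to the path $P_4$. For a graph $G$ with vertex set $V$, a module is a set $A\subseteq V$ such that for all $a,a'\in A$ and $b\in V\setminus A$, $ab$ is an edge iff $a'b$ is an edge; a module $A$ is strong if every module is either comparable to $A$ under inclusion or disjoint from it; a module is robust if it is a singleton or the intersection of all strong modules containing $\{x,y\}$ for some distinct vertices $x,y$. A labelled chain is $C=(I,\le,\ell)$ with $(I,\le)$ a chain and $\ell(i)=(G_i,r(i))$, $G_i$ a non-empty cograph and $r(i)\in\{0,1\}$. Its sum $\Sigma C$ is the disjoint union of the $G_i$ in which vertices of the same $G_i$ are adjacent as in $G_i$, and $x\in G_i$, $y\in G_j$ with $i<j$ are adjacent iff $r(i)=1$. The direct sum of graphs is their disjoint union with no edges between them; the complete sum is their disjoint union with all edges between distinct summands. $C$ is reduced if $(I,\le)$ is infinite; in every interval of $I$ with at least two elements both values $0$ and $1$ of $r$ occur; if $r(i)=0$ then $G_i$ is not a complete sum of at least two non-empty graphs; if $r(i)=1$ then $G_i$ is not a direct sum of at least two non-empty graphs; and if $i$ is the largest element of $I$ then $G_i$ is a direct sum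 or a complete sum of at least two single-vertex graphs. For $W\subseteq I$, $C_{\restriction W}=(W,\le,\ell_{\restriction W})$. An isomorphism of labelled chains $(I,\le,\ell)\to(I',\le',\ell')$ is an order isomorphism $h$ such that $G_i$ is isomorphic to $G'_{h(i)}$ and $r(i)=r'(h(i))$ for all $i$. *)

(* Defs.v *)
From Stdlib Require Import List.

Record graph := Graph { vert : Type; adj : vert -> vert -> Prop }.

Definition simple_graph (G : graph) : Prop :=
  (forall x y : vert G, adj G x y -> adj G y x) /\
  (forall x : vert G, ~ adj G x x).

Definition nonempty_graph (G : graph) : Prop := inhabited (vert G).

Definition P4_free (G : graph) : Prop :=
  ~ exists a b c d : vert G,
      a <> b /\ a <> c /\ a <> d /\ b <> c /\ b <> d /\ c <> d /\
      adj G a b /\ adj G b c /\ adj G c d /\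
      ~ adj G a c /\ ~ adj G a d /\ ~ adj G b d.

Definition cograph (G : graph) : Prop := simple_graph G /\ P4_free G.

Definition graph_iso (G H : graph) : Prop :=
  exists (f : vert G -> vert H) (g : vert H -> vert G),
    (forall x, g (f x) = x) /\ (forall y, f (g y) = y) /\
    (forall x y, adj G x y <-> adj H (f x) (f y)).

Definition vset (G : graph) := vert G -> Prop.

Definition subset {G : graph} (A B : vset G) : Prop := forall x, A x -> B x.

Definition is_module {G : graph} (A : vset G) : Prop :=
  forall a a' b, A a -> A a' -> ~ A b -> (adj G a b <-> adj G a' b).

Definition strong_module {G : graph} (A : vset G) : Prop :=
  is_module A /\
  forall B : vset G, is_module B ->
    subset A B \/ subset B A \/ (forall x, ~ (A x /\ B x)).

Definition robust_module {G : graph} (A : vset G) : Prop :=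
  (exists x, forall z, A z <-> z = x) \/
  (exists x y, x <> y /\
     forall z, A z <-> (forall M : vset G, strong_module M -> M x -> M y -> M z)).

(* the robust modules ordered by reverse inclusion have a least element,
   i.e. a robust module containing every robust module *)
Definition robust_has_least (G : graph) : Prop :=
  exists A : vset G, robust_module A /\
    forall B : vset G, robust_module B -> subset B A.

(* G is the direct (resp. complete) sum of at least two non-empty graphs:
   its vertex set is partitioned into at least two non-empty blocks
   (fibres of a surjection f onto an index type K with two distinct
   elements), with no (resp. all) edges between distinct blocks. *)
Definition sum_decomp (complete : bool) (G : graph) (K : Type)
    (f : vert G -> K) : Prop :=
  (forall k, exists x, f x = k) /\
  (exists k1 k2 : K, k1 <> k2) /\
  (forall x y, f x <> f y -> if complete then adj G x y else ~ adj G x y).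

Definition is_direct_sum2 (G : graph) : Prop :=
  exists (K : Type) (f : vert G -> K), sum_decomp false G K f.
Definition is_complete_sum2 (G : graph) : Prop :=
  exists (K : Type) (f : vert G -> K), sum_decomp true G K f.

(* same, with all summands single-vertex graphs (f injective) *)
Definition is_direct_sum_singletons (G : graph) : Prop :=
  exists (K : Type) (f : vert G -> K), sum_decomp false G K f /\
    (forall x y, f x = f y -> x = y).
Definition is_complete_sum_singletons (G : graph) : Prop :=
  exists (K : Type) (f : vert G -> K), sum_decomp true G K f /\
    (forall x y, f x = f y -> x = y).

Record lchain := LChain {
  idx : Type;
  cle : idx -> idx -> Prop;
  cG : idx -> graph;
  cr : idx -> bool }.

Definition clt (C : lchain) (i j : idx C) : Prop := cle C i j /\ i <> j.

Definition total_order {T : Type} (le : T -> T -> Prop) : Prop :=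
  (forall x, le x x) /\
  (forall x y, le x y -> le y x -> x = y) /\
  (forall x y z, le x y -> le y z -> le x z) /\
  (forall x y, le x y \/ le y x).

Definition labelled_chain (C : lchain) : Prop :=
  total_order (cle C) /\
  forall i, nonempty_graph (cG C i) /\ cograph (cG C i).

Definition sum_graph (C : lchain) : graph :=
  {| vert := { i : idx C & vert (cG C i) };
     adj := fun p q =>
       (exists (i : idx C) (x y : vert (cG C i)),
          p = existT _ i x /\ q = existT _ i y /\ adj (cG C i) x y) \/
       (clt C (projT1 p) (projT1 q) /\ cr C (projT1 p) = true) \/
       (clt C (projT1 q) (projT1 p) /\ cr C (projT1 q) = true) |}.

Definition infinite_set {T : Type} (W : T -> Prop) : Prop :=
  ~ exists l : list T, forall x, W x -> In x l.

Definition reduced (C : lchain) : Prop :=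
  labelled_chain C /\
  infinite_set (fun _ : idx C => True) /\
  (forall a b, clt C a b ->
     (exists x, cle C a x /\ cle C x b /\ cr C x = false) /\
     (exists y, cle C a y /\ cle C y b /\ cr C y = true)) /\
  (forall i, cr C i = false -> ~ is_complete_sum2 (cG C i)) /\
  (forall i, cr C i = true -> ~ is_direct_sum2 (cG C i)) /\
  (forall i, (forall j, cle C j i) ->
     is_direct_sum_singletons (cG C i) \/ is_complete_sum_singletons (cG C i)).

Definition initial_segment (C : lchain) (W : idx C -> Prop) : Prop :=
  forall i j, W j -> cle C i j -> W i.

Definition restrict (C : lchain) (W : idx C -> Prop) : lchain :=
  {| idx := { i : idx C | W i };
     cle := fun x y => cle C (proj1_sig x) (proj1_sig y);
     cG := fun x => cG C (proj1_sig x);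
     cr := fun x => cr C (proj1_sig x) |}.

Definition lchain_iso (C C' : lchain) (h : idx C -> idx C') : Prop :=
  (exists g : idx C' -> idx C, (forall i, g (h i) = i) /\ (forall j, h (g j) = j)) /\
  (forall i j, cle C i j <-> cle C' (h i) (h j)) /\
  (forall i, graph_iso (cG C i) (cG C' (h i)) /\ cr C i = cr C' (h i)).

(* Main.v *)
Require Import Defs.
From Stdlib Require Import List Classical ProofIrrelevance Eqdep ClassicalEpsilon.

Definition ix {D : lchain} (p : vert (sum_graph D)) : idx D := projT1 p.

Lemma red_tot D : reduced D -> total_order (cle D).
Proof. intros [[H _] _]. exact H. Qed.

Lemma red_ne D : reduced D -> forall i, inhabited (vert (cG D i)).
Proof. intros [[_ H] _] i. apply (H i). Qed.

Lemma red_sym D : reduced D -> forall i x y, adj (cG D i) x y -> adj (cG D i) y x.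
Proof. intros [[_ H] _] i. destruct (H i) as [_ [[S _] _]]. apply S. Qed.

Lemma red_int D : reduced D -> forall a b, clt D a b ->
     (exists x, cle D a x /\ cle D x b /\ cr D x = false) /\
     (exists y, cle D a y /\ cle D y b /\ cr D y = true).
Proof. intros [_ [_ [H _]]]. exact H. Qed.

Lemma red_int_b D : reduced D -> forall a b, clt D a b -> forall c : bool,
     exists x, cle D a x /\ cle D x b /\ cr D x = c.
Proof. intros HD a b Hab c. destruct (red_int D HD a b Hab) as [[x Hx] [y Hy]].
  destruct c; eauto. Qed.

Lemma clt_irrefl D i : ~ clt D i i.
Proof. intros [_ H]. apply H; reflexivity. Qed.

Lemma clt_asym D : total_order (cle D) -> forall i j, clt D i j -> clt D j i -> False.
Proof. intros [_ [A _]] i j [H1 N] [H2 _]. apply N, A; auto. Qed.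

Lemma cle_clt_trans D : total_order (cle D) -> forall i j k, cle D i j -> clt D j k -> clt D i k.
Proof. intros [R [A [T _]]] i j k H1 [H2 N]. split. eauto. intro E; subst. apply N, A; auto. Qed.

Lemma clt_cle_trans D : total_order (cle D) -> forall i j k, clt D i j -> cle D j k -> clt D i k.
Proof. intros [R [A [T _]]] i j k [H1 N] H2. split. eauto. intro E; subst. apply N, A; auto. Qed.

Lemma clt_cle D : forall i j, clt D i j -> cle D i j.
Proof. intros i j [H _]; exact H. Qed.

Lemma trich D : total_order (cle D) -> forall i j, clt D i j \/ i = j \/ clt D j i.
Proof. intros [R [A [T X]]] i j. destruct (classic (i = j)) as [E|N]; auto.
  destruct (X i j); [left|right;right]; split; auto. Qed.

Lemma not_clt_cle D : total_order (cle D) -> forall i j, ~ clt D i j -> cle D j i.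
Proof. intros HT i j H. destruct (trich D HT i j) as [h|[h|h]]; [tauto| subst; apply HT | apply clt_cle; auto]. Qed.

Lemma not_cle_clt D : total_order (cle D) -> forall i j, ~ cle D i j -> clt D j i.
Proof. intros HT i j H. destruct (trich D HT i j) as [h|[h|h]]; [destruct H; apply h| subst; destruct H; apply HT | auto]. Qed.

Lemma existT_inj D (i : idx D) (x y : vert (cG D i)) :
  existT (fun j => vert (cG D j)) i x = existT _ i y -> x = y.
Proof. intro E. apply inj_pair2 in E. exact E. Qed.

Lemma adj_same D (i : idx D) (x y : vert (cG D i)) :
  adj (sum_graph D) (existT _ i x) (existT _ i y) <-> adj (cG D i) x y.
Proof. split.
  - intros [[j [a [b [E1 [E2 H]]]]] | [[H _] | [H _]]].
    + assert (i = j) by (exact (f_equal (@projT1 _ _) E1)). subst j.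
      apply existT_inj in E1. apply existT_inj in E2. subst; auto.
    + simpl in H. exfalso; eapply clt_irrefl; eauto.
    + simpl in H. exfalso; eapply clt_irrefl; eauto.
  - intro H. left. exists i, x, y. auto.
Qed.

Lemma adj_cross D : total_order (cle D) -> forall p q : vert (sum_graph D),
  clt D (ix p) (ix q) ->
  (adj (sum_graph D) p q <-> cr D (ix p) = true) /\
  (adj (sum_graph D) q p <-> cr D (ix p) = true).
Proof. intros HT p q H. split; split.
  - intros [[j [a [b [E1 [E2 _]]]]] | [[_ H1] | [H1 _]]].
    + subst. exfalso; eapply clt_irrefl; exact H.
    + exact H1.
    + exfalso; eapply clt_asym; eauto.
  - intro; right; left; auto.
  - intros [[j [a [b [E1 [E2 _]]]]] | [[H1 _] | [_ H1]]].
    + subst. exfalso; eapply clt_irrefl; exact H.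
    + exfalso; eapply clt_asym; eauto.
    + exact H1.
  - intro; right; right; auto.
Qed.

Lemma adj_sum_sym D : reduced D -> forall p q, adj (sum_graph D) p q -> adj (sum_graph D) q p.
Proof. intros HD p q [[j [a [b [E1 [E2 H]]]]] | [H|H]].
  - left. exists j, b, a. repeat split; auto. eapply red_sym; eauto.
  - right; right; auto.
  - right; left; auto.
Qed.

Lemma clt_trans D : total_order (cle D) -> forall i j k, clt D i j -> clt D j k -> clt D i k.
Proof. intros HT i j k H1 H2. eapply cle_clt_trans; eauto. apply clt_cle; auto. Qed.

Lemma bool_iff (x y : bool) : (x = true <-> y = true) -> x = y.
Proof. destruct x, y; simpl; intros [H1 H2]; auto; symmetry; auto. Qed.

Definition mk {D : lchain} (i : idx D) (x : vert (cG D i)) : vert (sum_graph D) :=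
  existT (fun j => vert (cG D j)) i x.

Lemma neq_of_cr D (i j : idx D) : cr D i <> cr D j -> i <> j.
Proof. intros H E; subst; auto. Qed.

Lemma claim1 D (HD : reduced D) (B : vset (sum_graph D)) :
  is_module B -> forall a b z, B a -> B b -> clt D (ix a) (ix z) -> clt D (ix z) (ix b) -> B z.
Proof.
  intros HB a b z Ba Bb H1 H2. pose proof (red_tot D HD) as HT.
  destruct (classic (B z)) as [|Nz]; auto. exfalso.
  pose proof (HB a b z Ba Bb Nz) as M.
  destruct (adj_cross D HT a z H1) as [Ha _].
  destruct (adj_cross D HT z b H2) as [_ Hb].
  assert (E : cr D (ix a) = cr D (ix z)) by (apply bool_iff; split; intro h; [apply Hb, M, Ha, h | apply Ha, M, Hb, h]).
  destruct (red_int_b D HD _ _ H1 (negb (cr D (ix a)))) as [s [S1 [S2 S3]]].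
  assert (Nsa : ix a <> s) by (apply neq_of_cr; rewrite S3; destruct (cr D (ix a)); discriminate).
  assert (Nsz : s <> ix z) by (apply neq_of_cr; rewrite S3, <- E; destruct (cr D (ix a)); discriminate).
  assert (L1 : clt D (ix a) s) by (split; auto).
  assert (L2 : clt D s (ix z)) by (split; auto).
  destruct (red_ne D HD s) as [w'].
  set (w := mk s w').
  assert (L3 : clt D s (ix b)) by (eapply clt_trans; eauto).
  assert (Bw : B w).
  { destruct (classic (B w)) as [|Nw]; auto. exfalso.
    pose proof (HB a b w Ba Bb Nw) as M2.
    destruct (adj_cross D HT a w L1) as [Haw _].
    destruct (adj_cross D HT w b L3) as [_ Hbw].
    assert (H : cr D (ix a) = cr D s) by (apply bool_iff; split; intro h; [apply Hbw, M2, Haw, h | apply Haw, M2, Hbw, h]).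
    rewrite S3 in H. destruct (cr D (ix a)); discriminate. }
  pose proof (HB a w z Ba Bw Nz) as M3.
  destruct (adj_cross D HT w z L2) as [Hwz _].
  assert (H : cr D (ix a) = cr D s) by (apply bool_iff; split; intro h; [apply Hwz, M3, Ha, h | apply Ha, M3, Hwz, h]).
  rewrite S3 in H. destruct (cr D (ix a)); discriminate.
Qed.

Lemma mid_contra D (HD : reduced D) (B : vset (sum_graph D)) :
  is_module B -> forall a w z, B a -> B w -> ~ B z -> clt D (ix a) (ix w) -> clt D (ix w) (ix z) ->
  cr D (ix a) = cr D (ix w) .
Proof.
  intros HB a w z Ba Bw Nz L1 L2. pose proof (red_tot D HD) as HT.
  pose proof (HB a w z Ba Bw Nz) as M.
  destruct (adj_cross D HT a z (clt_trans D HT _ _ _ L1 L2)) as [Ha _].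
  destruct (adj_cross D HT w z L2) as [Hw _].
  apply bool_iff; split; intro h; [apply Hw, M, Ha, h | apply Ha, M, Hw, h].
Qed.

Lemma strict_between D (HD : reduced D) (i j : idx D) :
  clt D i j -> cr D i = cr D j -> exists s, clt D i s /\ clt D s j /\ cr D s = negb (cr D i).
Proof.
  intros H E. destruct (red_int_b D HD _ _ H (negb (cr D i))) as [s [S1 [S2 S3]]].
  exists s. split; [|split]; auto; split; auto; apply neq_of_cr; rewrite S3; try rewrite <- E;
  destruct (cr D i); discriminate.
Qed.

Lemma claim2 D (HD : reduced D) (B : vset (sum_graph D)) :
  is_module B -> forall a b z, B a -> B b -> clt D (ix a) (ix b) -> clt D (ix b) (ix z) -> B z.
Proof.
  intros HB a b z Ba Bb H1 H2. pose proof (red_tot D HD) as HT.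
  destruct (classic (B z)) as [|Nz]; auto. exfalso.
  pose proof (mid_contra D HD B HB a b z Ba Bb Nz H1 H2) as E.
  destruct (strict_between D HD _ _ H1 E) as [s [L1 [L2 S3]]].
  destruct (red_ne D HD s) as [w'].
  assert (Bw : B (mk s w')) by exact (claim1 D HD B HB a b (mk s w') Ba Bb L1 L2).
  pose proof (mid_contra D HD B HB a (mk s w') z Ba Bw Nz L1 (clt_trans D HT _ _ _ L2 H2)) as E2.
  simpl in E2. rewrite S3 in E2. destruct (cr D (ix a)); discriminate.
Qed.

Lemma red_max D : reduced D -> forall i, (forall j, cle D j i) ->
     is_direct_sum_singletons (cG D i) \/ is_complete_sum_singletons (cG D i).
Proof. intros [_ [_ [_ [_ [_ H]]]]]. exact H. Qed.
Lemma red_nocomp D : reduced D -> forall i, cr D i = false -> ~ is_complete_sum2 (cG D i).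
Proof. intros [_ [_ [_ [H _]]]]. exact H. Qed.
Lemma red_nodir D : reduced D -> forall i, cr D i = true -> ~ is_direct_sum2 (cG D i).
Proof. intros [_ [_ [_ [_ [H _]]]]]. exact H. Qed.

Lemma claim3 D (HD : reduced D) (B : vset (sum_graph D)) :
  is_module B -> forall a b z, B a -> B b -> clt D (ix a) (ix b) -> ix z = ix b -> B z.
Proof.
  intros HB a b z Ba Bb H1 H2. pose proof (red_tot D HD) as HT.
  destruct (classic (B z)) as [|Nz]; auto. exfalso.
  assert (H1' : clt D (ix a) (ix z)) by (rewrite H2; exact H1).
  pose proof (HB a b z Ba Bb Nz) as M.
  destruct (adj_cross D HT a z H1') as [Ha _].
  assert (K : cr D (ix a) <> cr D (ix z)).
  { intro E. destruct (strict_between D HD _ _ H1' E) as [s [L1 [L2 S3]]].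
    destruct (red_ne D HD s) as [w'].
    assert (Bw : B (mk s w')) by (refine (claim1 D HD B HB a b (mk s w') Ba Bb L1 _); simpl; rewrite <- H2; exact L2).
    pose proof (mid_contra D HD B HB a (mk s w') z Ba Bw Nz L1 L2) as E2.
    simpl in E2. rewrite S3 in E2. destruct (cr D (ix a)); discriminate. }
  destruct (classic (exists m, clt D (ix b) m)) as [[m Hm]|Nm].
  - destruct (red_ne D HD m) as [w'].
    assert (Bw : B (mk m w')) by exact (claim2 D HD B HB a b (mk m w') Ba Bb H1 Hm).
    pose proof (HB a (mk m w') z Ba Bw Nz) as M2.
    assert (Lz : clt D (ix z) (ix (mk m w'))) by (rewrite H2; exact Hm).
    destruct (adj_cross D HT z (mk m w') Lz) as [_ Hw].
    apply K, bool_iff; split; intro h; [apply Hw, M2, Ha, h | apply Ha, M2, Hw, h].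
  - assert (Hmax : forall j, cle D j (ix b)).
    { intro j. apply not_clt_cle; auto. intro; apply Nm; eauto. }
    destruct b as [l b']. destruct z as [l' z']. unfold ix in H2; simpl in H2. subst l'.
    pose proof (adj_same D l b' z') as Hs.
    assert (Nbz : b' <> z') by (intro; subst; contradiction).
    destruct (red_max D HD l Hmax) as [[K0 [f [[Hsur [Hk Hf]] Hinj]]]|[K0 [f [[Hsur [Hk Hf]] Hinj]]]].
    + assert (nadj : ~ adj (cG D l) b' z') by (apply Hf; intro E; apply Nbz, Hinj, E).
      assert (cra : cr D (ix a) = false).
      { assert (cra : cr D (ix a) <> true) by (intro E; apply nadj, Hs, M, Ha, E).
        destruct (cr D (ix a)); [congruence|reflexivity]. }
      assert (crl : cr D l = true).
      { destruct (cr D l) eqn:E; auto. exfalso. apply K. simpl. rewrite cra, E. reflexivity. }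
      apply (red_nodir D HD l crl). exists K0, f. split; auto.
    + assert (yadj : adj (cG D l) b' z') by (apply Hf; intro E; apply Nbz, Hinj, E).
      assert (cra : cr D (ix a) = true) by (apply Ha, M, Hs, yadj).
      assert (crl : cr D l = false).
      { destruct (cr D l) eqn:E; auto. exfalso. apply K. simpl. rewrite cra, E. reflexivity. }
      apply (red_nocomp D HD l crl). exists K0, f. split; auto.
Qed.

Lemma claimA D (HD : reduced D) (B : vset (sum_graph D)) :
  is_module B -> forall a b z, B a -> B b -> clt D (ix a) (ix b) -> clt D (ix a) (ix z) -> B z.
Proof.
  intros HB a b z Ba Bb H1 H2. pose proof (red_tot D HD) as HT.
  destruct (trich D HT (ix z) (ix b)) as [h|[h|h]].
  - exact (claim1 D HD B HB a b z Ba Bb H2 h).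
  - exact (claim3 D HD B HB a b z Ba Bb H1 h).
  - exact (claim2 D HD B HB a b z Ba Bb H1 h).
Qed.

Definition Pset (D : lchain) (k : idx D) : vset (sum_graph D) := fun v => cle D k (ix v).

Lemma P_module D (HD : reduced D) k : is_module (Pset D k).
Proof.
  pose proof (red_tot D HD) as HT.
  intros a a' b Ha Ha' Nb. unfold Pset in *.
  assert (L : clt D (ix b) k) by (apply not_cle_clt; auto).
  destruct (adj_cross D HT b a (clt_cle_trans D HT _ _ _ L Ha)) as [_ H1].
  destruct (adj_cross D HT b a' (clt_cle_trans D HT _ _ _ L Ha')) as [_ H2].
  split; intro h; [apply H2, H1, h | apply H1, H2, h].
Qed.

Lemma P_strong D (HD : reduced D) k : strong_module (Pset D k).
Proof.
  pose proof (red_tot D HD) as HT.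
  split; [apply P_module; auto|]. intros B HB.
  destruct (classic (exists q, B q /\ ~ Pset D k q)) as [[q [Bq Nq]]|N1].
  - destruct (classic (exists p, B p /\ Pset D k p)) as [[p [Bp Pp]]|N2].
    + left. intros z Pz. unfold Pset in *.
      assert (L : clt D (ix q) k) by (apply not_cle_clt; auto).
      exact (claimA D HD B HB q p z Bq Bp (clt_cle_trans D HT _ _ _ L Pp) (clt_cle_trans D HT _ _ _ L Pz)).
    + right; right. intros x [Px Bx]. apply N2; eauto.
  - right; left. intros x Bx. apply NNPP. intro N. apply N1; eauto.
Qed.

Definition Int (G : graph) (x y z : vert G) : Prop :=
  forall M : vset G, strong_module M -> M x -> M y -> M z.

Lemma Int_sym G x y z : Int G x y z -> Int G y x z.
Proof. intros H M SM My Mx. apply H; auto. Qed.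

Lemma keyK D (HD : reduced D) (x y : vert (sum_graph D)) :
  clt D (ix x) (ix y) -> forall z, Int (sum_graph D) x y z <-> cle D (ix x) (ix z).
Proof.
  pose proof (red_tot D HD) as HT. intros Hxy z. split.
  - intro H. apply (H (Pset D (ix x)) (P_strong D HD _)); unfold Pset; [apply HT | apply clt_cle; auto].
  - intros Hz M [HM SM] Mx My.
    destruct (trich D HT (ix x) (ix z)) as [h|[h|h]].
    + exact (claimA D HD M HM x y z Mx My Hxy h).
    + apply NNPP. intro Nz.
      set (B' := fun v : vert (sum_graph D) => clt D (ix x) (ix v) \/ (ix v = ix x /\ ~ M v)).
      assert (Key : forall q, ~ B' q -> forall p, B' p -> (adj (sum_graph D) p q <-> cr D (ix q) = true)).
      { intros q Nq p Bp. unfold B' in Nq.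
        assert (Lq : cle D (ix q) (ix x)) by (apply not_clt_cle; auto; intro; apply Nq; auto).
        destruct (trich D HT (ix q) (ix x)) as [h1|[h1|h1]].
        - assert (Lp : clt D (ix q) (ix p)).
          { destruct Bp as [Bp|[Bp _]]. eapply clt_trans; eauto. rewrite Bp; auto. }
          apply (adj_cross D HT q p Lp).
        - assert (Mq : M q) by (apply NNPP; intro; apply Nq; auto).
          destruct Bp as [Bp|[Bp Np]].
          + apply (adj_cross D HT q p). rewrite h1; auto.
          + assert (Lp : clt D (ix p) (ix y)) by (rewrite Bp; auto).
            destruct (adj_cross D HT p y Lp) as [_ Hy].
            pose proof (HM q y p Mq My Np) as Mm.
            rewrite h1, <- Bp. split; intro hh.
            * apply Hy, Mm, adj_sum_sym, hh; auto.
            * apply adj_sum_sym; [auto| apply Mm, Hy, hh].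
        - exfalso. apply Nq. left. exact h1. }
      assert (HB' : is_module B').
      { intros p p' q Bp Bp' Nq. rewrite (Key q Nq p Bp), (Key q Nq p' Bp'). tauto. }
      destruct (SM B' HB') as [S|[S|S]].
      * destruct (S x Mx) as [h1|[_ h1]]; [eapply clt_irrefl; eauto | auto].
      * apply Nz, S. right. split; auto.
      * apply (S y). split; auto. left; auto.
    + exfalso. apply (clt_asym D HT _ _ h). split; auto. intro E. rewrite E in h. eapply clt_irrefl; eauto.
Qed.

Definition iso_data (G H : graph) (f : vert G -> vert H) (g : vert H -> vert G) : Prop :=
  (forall x, g (f x) = x) /\ (forall y, f (g y) = y) /\
  (forall x y, adj G x y <-> adj H (f x) (f y)).

Lemma iso_swap G H f g : iso_data G H f g -> iso_data H G g f.
Proof. intros [A [B C]]. split; [|split]; auto. intros x y. rewrite C, !B. tauto. Qed.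

Lemma iso_comp G H K f g f' g' : iso_data G H f g -> iso_data H K f' g' ->
  iso_data G K (fun x => f' (f x)) (fun z => g (g' z)).
Proof. intros [A [B C]] [A' [B' C']]. split; [|split].
  - intro x. rewrite A', A. auto.
  - intro y. rewrite B, B'. auto.
  - intros x y. rewrite C, C'. tauto. Qed.

Lemma iso_of G H : graph_iso G H -> exists f g, iso_data G H f g.
Proof. intros [f [g H1]]. exists f, g. exact H1. Qed.

Lemma module_pull G H f g (I : iso_data G H f g) (M : vset H) :
  is_module M -> is_module (fun v => M (f v)).
Proof. destruct I as [A [B C]]. intros HM a a' b Ma Ma' Nb. rewrite !C. apply HM; auto. Qed.

Lemma strong_pull G H f g (I : iso_data G H f g) (M : vset H) :
  strong_module M -> strong_module (fun v => M (f v)).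
Proof.
  intros [HM SM]. split; [eapply module_pull; eauto|].
  intros N HN. pose proof (module_pull H G g f (iso_swap _ _ _ _ I) N HN) as HN'.
  destruct I as [A [B C]].
  destruct (SM _ HN') as [S|[S|S]].
  - left. intros v Mv. rewrite <- (A v). apply S; auto.
  - right; left. intros v Nv. apply S. rewrite A; auto.
  - right; right. intros v [Mv Nv]. apply (S (f v)). rewrite A; auto.
Qed.

Lemma Int_iso G H f g (I : iso_data G H f g) x y z :
  Int G x y z <-> Int H (f x) (f y) (f z).
Proof. split.
  - intros Hi M SM Mx My. exact (Hi _ (strong_pull G H f g I M SM) Mx My).
  - intros Hi N SN Nx Ny. pose proof (strong_pull H G g f (iso_swap _ _ _ _ I) N SN) as S.
    destruct I as [A [B C]].
    rewrite <- (A z). apply (Hi _ S); simpl; rewrite A; auto.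
Qed.

Lemma inf_other D : infinite_set (fun _ : idx D => True) -> forall i : idx D, exists j, j <> i.
Proof. intros Hinf i. apply NNPP. intro N. apply Hinf. exists (i :: nil).
  intros x _. left. apply NNPP. intro E. apply N. exists x. auto. Qed.

Lemma red_inf D : reduced D -> infinite_set (fun _ : idx D => True).
Proof. intros [_ [H _]]. exact H. Qed.

Lemma no_min G D f g (HD : reduced D) (I : iso_data G (sum_graph D) f g) :
  ~ robust_has_least G -> forall i, exists j, clt D j i.
Proof.
  intros NR i. pose proof (red_tot D HD) as HT. apply NNPP. intro N.
  assert (Hi : forall j, cle D i j) by (intro j; apply not_clt_cle; auto; intro; apply N; eauto).
  destruct (inf_other D (red_inf D HD) i) as [j Hj].
  assert (Lij : clt D i j) by (split; auto).
  destruct (red_ne D HD i) as [x']. destruct (red_ne D HD j) as [y'].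
  set (x := mk i x'). set (y := mk j y').
  pose proof (keyK D HD x y Lij) as K.
  apply NR. exists (fun _ => True). split.
  - right. exists (g x), (g y). destruct I as [A [B C]]. split.
    + intro E. apply (f_equal f) in E. rewrite !B in E. apply Hj. symmetry. exact (f_equal (@projT1 _ _) E).
    + intro z. split; auto. intros _. apply (Int_iso G _ f g (conj A (conj B C))).
      rewrite !B. apply K. apply Hi.
  - intros B _ v _. auto.
Qed.

Definition good (C C' : lchain) (phi : vert (sum_graph C) -> vert (sum_graph C')) (i : idx C) : Prop :=
  exists x w, ix x = i /\ clt C i (ix w) /\ ix (phi x) <> ix (phi w).

Definition corr (C C' : lchain) (phi : vert (sum_graph C) -> vert (sum_graph C')) (i : idx C) (k : idx C') : Prop :=
  forall u, cle C i (ix u) <-> cle C' k (ix (phi u)).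

Lemma transfer C C' phi psi (HC : reduced C) (HC' : reduced C')
  (I : iso_data (sum_graph C) (sum_graph C') phi psi) i :
  good C C' phi i -> exists k, corr C C' phi i k /\ good C' C psi k.
Proof.
  intros [x [w [Ex [Lw Nw]]]]. subst i.
  pose proof (red_tot C' HC') as HT'.
  pose proof (keyK C HC x w Lw) as K.
  pose proof I as [A [B Cc]].
  destruct (trich C' HT' (ix (phi x)) (ix (phi w))) as [h|[h|h]].
  - pose proof (keyK C' HC' _ _ h) as K'.
    exists (ix (phi x)). split.
    + intro u. rewrite <- K, <- K'. apply Int_iso with (g := psi); auto.
    + exists (phi x), (phi w). split; auto. split; auto. rewrite !A.
      destruct Lw as [_ Lw]. auto.
  - contradiction.
  - pose proof (keyK C' HC' _ _ h) as K'.
    exists (ix (phi w)). split.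
    + intro u. rewrite <- K, <- K'. rewrite (Int_iso _ _ phi psi I).
      split; apply Int_sym.
    + exists (phi w), (phi x). split; auto. split; auto. rewrite !A.
      destruct Lw as [_ Lw]. auto.
Qed.

Lemma good_down C C' phi (HC : reduced C) i j :
  good C C' phi i -> clt C j i -> good C C' phi j.
Proof.
  intros [x [w [Ex [Lw Nw]]]] Lji. pose proof (red_tot C HC) as HT.
  destruct (red_ne C HC j) as [y']. set (y := mk j y').
  destruct (classic (ix (phi y) = ix (phi x))) as [E|E].
  - exists y, w. split; [reflexivity|]. split.
    + eapply clt_trans; eauto.
    + rewrite E. auto.
  - exists y, x. split; [reflexivity|]. split; [rewrite Ex; auto| auto].
Qed.

Lemma mono C C' phi psi (HC : reduced C) (HC' : reduced C')
  (I : iso_data (sum_graph C) (sum_graph C') phi psi) i k j m :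
  corr C C' phi i k -> corr C C' phi j m -> (cle C i j <-> cle C' k m).
Proof.
  intros Ci Cj. pose proof (red_tot C HC) as [R [As [T X]]]. pose proof (red_tot C' HC') as [R' [As' [T' X']]].
  destruct I as [A [B Cc]]. split.
  - intro Lij. destruct (red_ne C' HC' m) as [v']. set (u := psi (mk m v')).
    assert (Hm : cle C j (ix u)) by (apply Cj; unfold u; rewrite B; apply R').
    pose proof (proj1 (Ci u) (T _ _ _ Lij Hm)) as H. unfold u in H; rewrite B in H. exact H.
  - intro Lkm. destruct (red_ne C HC j) as [u']. set (u := mk j u').
    assert (Hm : cle C' m (ix (phi u))) by (apply Cj; apply R).
    exact (proj2 (Ci u) (T' _ _ _ Lkm Hm)).
Qed.

Definition get (D : lchain) (k : idx D) (p : vert (sum_graph D)) (e : ix p = k) : vert (cG D k) :=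
  eq_rect (ix p) (fun j => vert (cG D j)) (projT2 p) k e.

Lemma get_spec D k p e : existT (fun j => vert (cG D j)) k (get D k p e) = p.
Proof. destruct p as [j v]. unfold ix in e. simpl in e. subst. reflexivity. Qed.

Lemma fibre_iso C C' phi psi (I : iso_data (sum_graph C) (sum_graph C') phi psi) i k :
  (forall u, ix u = i <-> ix (phi u) = k) -> graph_iso (cG C i) (cG C' k).
Proof.
  intros H. pose proof I as [A [B Cc]].
  assert (e1 : forall x, ix (phi (mk i x)) = k) by (intro x; apply H; reflexivity).
  assert (e2 : forall y, ix (psi (mk k y)) = i) by (intro y; apply H; rewrite B; reflexivity).
  exists (fun x => get C' k (phi (mk i x)) (e1 x)), (fun y => get C i (psi (mk k y)) (e2 y)).
  split; [|split].
  - intro x. apply existT_inj. rewrite get_spec. unfold mk at 1. rewrite get_spec. apply A.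
  - intro y. apply existT_inj. rewrite get_spec. unfold mk at 1. rewrite get_spec. apply B.
  - intros x y. rewrite <- adj_same, <- (adj_same C').
    rewrite !get_spec. apply Cc.
Qed.

Lemma exists_good C C' phi psi (HC : reduced C) (HC' : reduced C')
  (I : iso_data (sum_graph C) (sum_graph C') phi psi) : exists i, good C C' phi i.
Proof.
  apply NNPP. intro N. pose proof (red_tot C HC) as HT. pose proof I as [A [B Cc]].
  assert (H0 : forall u v, ix u <> ix v -> ix (phi u) = ix (phi v)).
  { intros u v Nuv. destruct (trich C HT (ix u) (ix v)) as [h|[h|h]].
    - apply NNPP; intro E. apply N. exists (ix u), u, v. auto.
    - contradiction.
    - apply NNPP; intro E. apply N. exists (ix v), v, u. auto. }
  assert (H1 : forall u v, ix (phi u) = ix (phi v)).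
  { intros u v. destruct (classic (ix u = ix v)) as [E|E]; [|auto].
    destruct (inf_other C (red_inf C HC) (ix u)) as [t Ht]. destruct (red_ne C HC t) as [w'].
    rewrite (H0 u (mk t w')), (H0 v (mk t w')); auto; simpl; intro; apply Ht; congruence. }
  assert (Hk : exists k : idx C', True).
  { apply NNPP; intro E. apply (red_inf C' HC'). exists nil. intros x _. apply E. eauto. }
  destruct Hk as [k1 _]. destruct (inf_other C' (red_inf C' HC') k1) as [k2 Hk2].
  destruct (red_ne C' HC' k1) as [y1]. destruct (red_ne C' HC' k2) as [y2].
  pose proof (H1 (psi (mk k1 y1)) (psi (mk k2 y2))) as E. rewrite !B in E. simpl in E. auto.
Qed.

Lemma sig_ext (A : Type) (P : A -> Prop) (a b : sig P) : proj1_sig a = proj1_sig b -> a = b.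
Proof. destruct a, b; simpl; intro; subst; f_equal; apply proof_irrelevance. Qed.

Lemma corr_conv C C' phi psi (I : iso_data (sum_graph C) (sum_graph C') phi psi) k j :
  corr C' C psi k j -> corr C C' phi j k.
Proof. intros H u. pose proof I as [A _]. rewrite (H (phi u)), A. tauto. Qed.

Lemma mono_lt C C' phi psi (HC : reduced C) (HC' : reduced C')
  (I : iso_data (sum_graph C) (sum_graph C') phi psi) i k j m :
  corr C C' phi i k -> corr C C' phi j m -> (clt C i j <-> clt C' k m).
Proof.
  intros Ci Cj. pose proof (mono C C' phi psi HC HC' I i k j m Ci Cj) as M1.
  pose proof (mono C C' phi psi HC HC' I j m i k Cj Ci) as M2.
  pose proof (red_tot C HC) as [R [As _]]. pose proof (red_tot C' HC') as [R' [As' _]].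
  split; intros [L N]; split.
  - apply M1; auto.
  - intro E; subst. apply N, As; auto. apply M2, R'.
  - apply M1; auto.
  - intro E; subst. apply N, As'; auto. apply M2, R.
Qed.

Lemma list_min D (HT : total_order (cle D)) (W : idx D -> Prop) : forall l : list (idx D),
  (exists x, In x l /\ W x) -> exists m, In m l /\ W m /\ forall x, In x l -> W x -> cle D m x.
Proof.
  pose proof HT as [R [As [T X]]].
  induction l as [|a l IH]; intros [x [Hx Wx]]; [destruct Hx|].
  destruct (classic (exists y, In y l /\ W y)) as [Ey|Ny].
  - destruct (IH Ey) as [m [Hm [Wm Mm]]].
    destruct (X a m) as [L|L].
    + destruct (classic (W a)) as [Wa|Na].
      * exists a. split; [left; auto|split; auto]. intros y [E|Hy] Wy; [subst; apply R|]. eapply T; eauto.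
      * exists m. split; [right; auto|split; auto]. intros y [E|Hy] Wy; [subst; contradiction|]. auto.
    + exists m. split; [right; auto|split; auto]. intros y [E|Hy] Wy; [subst; auto|]. auto.
  - exists a. destruct Hx as [E|Hx]; [subst|exfalso; apply Ny; eauto].
    split; [left; auto|split; auto]. intros y [E|Hy] Wy; [subst; apply R|]. exfalso; apply Ny; eauto.
Qed.

Lemma inf_below D (HT : total_order (cle D)) (NM : forall i, exists j, clt D j i) i1 :
  infinite_set (fun i => clt D i i1).
Proof.
  intros [l Hl]. destruct (NM i1) as [j0 Hj0].
  destruct (list_min D HT (fun i => clt D i i1) l) as [m [Hm [Wm Mm]]]; [eauto|].
  destruct (NM m) as [j Hj].
  assert (Wj : clt D j i1) by (eapply clt_trans; eauto).
  pose proof (Mm j (Hl j Wj) Wj). destruct Hj as [Hj N]. apply N. apply HT; auto.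
Qed.

Lemma lt_le_false D (HT : total_order (cle D)) a b : clt D a b -> cle D b a -> False.
Proof. intros H1 H2. eapply clt_irrefl. eapply clt_cle_trans; eauto. Qed.

Lemma fibre_char C C' phi psi (HC : reduced C) (HC' : reduced C')
  (I : iso_data (sum_graph C) (sum_graph C') phi psi) i k i1 k1 :
  corr C C' phi i k -> corr C C' phi i1 k1 -> clt C i i1 -> clt C' k k1 ->
  (forall m, clt C' m k1 -> exists j, corr C C' phi j m) ->
  (forall m, clt C m i1 -> exists m', corr C C' phi m m') ->
  forall u, ix u = i <-> ix (phi u) = k.
Proof.
  intros Ci C1 L L' Hm Hm' u. pose proof (red_tot C HC) as HT. pose proof (red_tot C' HC') as HT'.
  split; intro E.
  - assert (Hk : cle C' k (ix (phi u))) by (apply Ci; rewrite E; apply HT).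
    destruct (trich C' HT' k (ix (phi u))) as [h|[h|h]]; [|auto|exfalso; eapply (lt_le_false C' HT'); eauto].
    exfalso. destruct (trich C' HT' (ix (phi u)) k1) as [h2|[h2|h2]].
    + destruct (Hm _ h2) as [j Cj].
      assert (cle C j (ix u)) by (apply Cj; apply HT').
      assert (clt C i j) by (apply (mono_lt C C' phi psi HC HC' I i k j _ Ci Cj); auto).
      rewrite E in *. eapply (lt_le_false C HT); eauto.
    + assert (cle C i1 (ix u)) by (apply C1; rewrite h2; apply HT').
      rewrite E in *. eapply (lt_le_false C HT); eauto.
    + assert (cle C i1 (ix u)) by (apply C1; apply clt_cle; auto).
      rewrite E in *. eapply (lt_le_false C HT); eauto.
  - assert (Hk : cle C i (ix u)) by (apply Ci; rewrite E; apply HT').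
    destruct (trich C HT i (ix u)) as [h|[h|h]]; [|auto|exfalso; eapply (lt_le_false C HT); eauto].
    exfalso. destruct (trich C HT (ix u) i1) as [h2|[h2|h2]].
    + destruct (Hm' _ h2) as [m' Cm].
      assert (cle C' m' (ix (phi u))) by (apply Cm; apply HT).
      assert (clt C' k m') by (apply (mono_lt C C' phi psi HC HC' I i k _ m' Ci Cm); auto).
      rewrite E in *. eapply (lt_le_false C' HT'); eauto.
    + assert (cle C' k1 (ix (phi u))) by (apply C1; rewrite h2; apply HT).
      rewrite E in *. eapply (lt_le_false C' HT'); eauto.
    + assert (cle C' k1 (ix (phi u))) by (apply C1; apply clt_cle; auto).
      rewrite E in *. eapply (lt_le_false C' HT'); eauto.
Qed.

Lemma corr_uniq_l C C' phi psi (HC : reduced C) (HC' : reduced C')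
  (I : iso_data (sum_graph C) (sum_graph C') phi psi) i j k :
  corr C C' phi i k -> corr C C' phi j k -> i = j.
Proof. intros H1 H2. pose proof (red_tot C HC) as [_ [As _]]. pose proof (red_tot C' HC') as [R' _].
  apply As; [apply (mono C C' phi psi HC HC' I i k j k H1 H2) | apply (mono C C' phi psi HC HC' I j k i k H2 H1)]; apply R'. Qed.

Lemma corr_uniq_r C C' phi psi (HC : reduced C) (HC' : reduced C')
  (I : iso_data (sum_graph C) (sum_graph C') phi psi) i k m :
  corr C C' phi i k -> corr C C' phi i m -> k = m.
Proof. intros H1 H2. pose proof (red_tot C HC) as [R _]. pose proof (red_tot C' HC') as [_ [As' _]].
  apply As'; [apply (mono C C' phi psi HC HC' I i k i m H1 H2) | apply (mono C C' phi psi HC HC' I i m i k H2 H1)]; apply R. Qed.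

Theorem lemma2p6 (G G' : graph) (C C' : lchain) :
  cograph G -> cograph G' -> graph_iso G G' ->
  ~ robust_has_least G -> ~ robust_has_least G' ->
  reduced C -> reduced C' ->
  graph_iso G (sum_graph C) -> graph_iso G' (sum_graph C') ->
  exists (W : idx C -> Prop) (W' : idx C' -> Prop)
         (h : idx (restrict C W) -> idx (restrict C' W')),
    initial_segment C W /\ infinite_set W /\
    initial_segment C' W' /\ infinite_set W' /\
    lchain_iso (restrict C W) (restrict C' W') h.
Proof.
  intros _ _ iso0 NR NR' HC HC' iso1 iso2.
  destruct (iso_of _ _ iso0) as [f0 [g0 I0]].
  destruct (iso_of _ _ iso1) as [f1 [g1 I1]].
  destruct (iso_of _ _ iso2) as [f2 [g2 I2]].
  pose proof (iso_comp _ _ _ _ _ _ _ (iso_swap _ _ _ _ I1) (iso_comp _ _ _ _ _ _ _ I0 I2)) as I.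
  simpl in I.
  set (phi := fun x => f2 (f0 (g1 x))) in I. set (psi := fun z => f1 (g0 (g2 z))) in I.
  pose proof (red_tot C HC) as HT. pose proof (red_tot C' HC') as HT'.
  pose proof (no_min G C f1 g1 HC I1 NR) as NM.
  pose proof (no_min G' C' f2 g2 HC' I2 NR') as NM'.
  destruct (exists_good C C' phi psi HC HC' I) as [i1 G1].
  destruct (transfer C C' phi psi HC HC' I i1 G1) as [k1 [C1 G1']].
  assert (Hm : forall m, clt C' m k1 -> exists j, corr C C' phi j m /\ clt C j i1).
  { intros m h. pose proof (good_down C' C psi HC' k1 m G1' h) as Gm.
    destruct (transfer C' C psi phi HC' HC (iso_swap _ _ _ _ I) m Gm) as [j [Cj _]].
    apply (corr_conv C C' phi psi I) in Cj. exists j. split; auto.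
    apply (mono_lt C C' phi psi HC HC' I j m i1 k1 Cj C1); auto. }
  assert (Hm2 : forall m, clt C m i1 -> exists m', corr C C' phi m m' /\ clt C' m' k1).
  { intros m h. pose proof (good_down C C' phi HC i1 m G1 h) as Gm.
    destruct (transfer C C' phi psi HC HC' I m Gm) as [m' [Cm _]].
    exists m'. split; auto.
    apply (mono_lt C C' phi psi HC HC' I m m' i1 k1 Cm C1); auto. }
  pose (hsig := fun s : {i | clt C i i1} =>
          constructive_indefinite_description _ (Hm2 (proj1_sig s) (proj2_sig s))).
  pose (gsig := fun t : {k | clt C' k k1} =>
          constructive_indefinite_description _ (Hm (proj1_sig t) (proj2_sig t))).
  pose (h := fun s : {i | clt C i i1} =>
          exist (fun k => clt C' k k1) (proj1_sig (hsig s)) (proj2 (proj2_sig (hsig s)))).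
  pose (g := fun t : {k | clt C' k k1} =>
          exist (fun i => clt C i i1) (proj1_sig (gsig t)) (proj2 (proj2_sig (gsig t)))).
  assert (Hcorr : forall s, corr C C' phi (proj1_sig s) (proj1_sig (h s))).
  { intro s. exact (proj1 (proj2_sig (hsig s))). }
  assert (Gcorr : forall t, corr C C' phi (proj1_sig (g t)) (proj1_sig t)).
  { intro t. exact (proj1 (proj2_sig (gsig t))). }
  exists (fun i => clt C i i1), (fun k => clt C' k k1), h.
  split; [|split; [|split; [|split]]].
  - intros i j Wj Lij. eapply cle_clt_trans; eauto.
  - apply inf_below; auto.
  - intros i j Wj Lij. eapply cle_clt_trans; eauto.
  - apply inf_below; auto.
  - split; [|split].
    + exists g. split.
      * intro s. apply sig_ext. symmetry.
        exact (corr_uniq_l C C' phi psi HC HC' I _ _ _ (Hcorr s) (Gcorr (h s))).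
      * intro t. apply sig_ext.
        exact (corr_uniq_r C C' phi psi HC HC' I _ _ _ (Hcorr (g t)) (Gcorr t)).
    + intros s t. simpl. exact (mono C C' phi psi HC HC' I _ _ _ _ (Hcorr s) (Hcorr t)).
    + intro s. simpl.
      assert (L' : clt C' (proj1_sig (h s)) k1) by exact (proj2_sig (h s)).
      assert (Fib : forall u, ix u = proj1_sig s <-> ix (phi u) = proj1_sig (h s)).
      { apply (fibre_char C C' phi psi HC HC' I _ _ i1 k1 (Hcorr s) C1 (proj2_sig s) L').
        - intros m hm. destruct (Hm m hm) as [j [Cj _]]. eauto.
        - intros m hm. destruct (Hm2 m hm) as [m' [Cm _]]. eauto. }
      split.
      * exact (fibre_iso C C' phi psi I _ _ Fib).
      * destruct (red_ne C HC (proj1_sig s)) as [x']. destruct (red_ne C HC i1) as [v'].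
        set (u := mk (proj1_sig s) x'). set (v := mk i1 v').
        assert (Eu : ix (phi u) = proj1_sig (h s)) by (apply Fib; reflexivity).
        assert (Lv : cle C' k1 (ix (phi v))) by (apply C1; apply HT).
        assert (Luv : clt C' (ix (phi u)) (ix (phi v))) by (rewrite Eu; eapply clt_cle_trans; eauto).
        destruct (adj_cross C HT u v (proj2_sig s)) as [A1 _].
        destruct (adj_cross C' HT' _ _ Luv) as [A2 _].
        rewrite Eu in A2. destruct I as [_ [_ Ia]].
        apply bool_iff. split; intro hh.
        -- apply A2, Ia, A1, hh.
        -- apply A1, Ia, A2, hh.
Qed.
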